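(* For any $\beta>0$, $$\sum_{(m,n,p)\in\mathbb Z^3\setminus\{0\}} T(m,n,p)\,e^{-\beta R(m,n,p)}>0,$$ where $R(m,n,p)=m^2+n^2+p^2+mp+np$ and $T(m,n,p)=mn(m+p)(n+p)$. *)

(* Defs.v *)
From mathcomp Require Import all_boot all_order all_algebra.
From mathcomp Require Import all_classical all_reals all_analysis.
Set Implicit Arguments. Unset Strict Implicit. Unset Printing Implicit Defensive.
Import Order.TTheory GRing.Theory Num.Theory.
Local Open Scope ring_scope.

Definition Rq (m n p : int) : int := m ^+ 2 + n ^+ 2 + p ^+ 2 + m * p + n * p.

Definition Tq (m n p : int) : int := m * n * (m + p) * (n + p).

Definition zrange (N : nat) : seq int := [seq (i%:Z - N%:Z) | i <- iota 0 (N.*2.+1)].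

Definition zbox (N : nat) : seq (int * int * int) :=
  flatten [seq [seq (m, n, p) | p <- zrange N] | m <- zrange N, n <- zrange N].

Definition theta_partial (R : realType) (beta : R) (N : nat) : R :=
  \sum_(x <- zbox N | x != (0, 0, 0))
     (Tq x.1.1 x.1.2 x.2)%:~R * expR (- (beta * (Rq x.1.1 x.1.2 x.2)%:~R)).

(* Main.v *)
Require Import Defs.
From mathcomp Require Import all_boot all_order all_algebra.
From mathcomp Require Import all_classical all_reals all_analysis.
From mathcomp Require Import zify ring lra.
Import Order.TTheory GRing.Theory Num.Theory.
Import numFieldNormedType.Exports.
Local Open Scope ring_scope.

Lemma flat3 (T : Type) (s t u : seq T) :
  flatten [seq [seq (m, n, p) | p <- u] | m <- s, n <- t] =
  [seq (mn, p) | mn <- [seq (m, n) | m <- s, n <- t], p <- u].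
Proof.
elim: s => //= m s IH.
by rewrite allpairs_cat flatten_cat IH allpairs_mapl.
Qed.

Lemma mem_zrange N (x : int) : (x \in zrange N) = (- (N%:Z) <= x <= N%:Z).
Proof.
apply/mapP/idP.
  case=> i; rewrite mem_iota => /andP[_ hi] ->.
  rewrite add0n in hi; apply/andP; split; lia.
move=> /andP[h1 h2]; exists (absz (x + N%:Z)).
  rewrite mem_iota add0n; apply/andP; split; lia.
lia.
Qed.

Lemma uniq_zrange N : uniq (zrange N).
Proof.
rewrite map_inj_uniq ?iota_uniq // => i j /= h; apply/eqP; rewrite -eqz_nat; apply/eqP; lia.
Qed.

Definition zr3 a b c : seq (int * int * int) :=
  flatten [seq [seq (m, n, p) | p <- zrange c] | m <- zrange a, n <- zrange b].

Lemma zboxE N : zbox N = zr3 N N N. Proof. by []. Qed.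

Lemma mem_zr3 a b c x : (x \in zr3 a b c) =
  [&& x.1.1 \in zrange a, x.1.2 \in zrange b & x.2 \in zrange c].
Proof.
rewrite /zr3 flat3; case: x => [[m n] p].
apply/idP/idP.
  case/allpairsP=> [[mn q]] [h12 h3 e]; case/allpairsP: h12 => [[m' n']] [h1 h2 e'].
  move: e; rewrite e' => -[-> -> ->]; by rewrite /= h1 h2 h3.
case/and3P=> h1 h2 h3; apply/allpairsP; exists ((m, n), p); split => //.
by apply/allpairsP; exists (m, n).

Qed.

Lemma uniq_zr3 a b c : uniq (zr3 a b c).
Proof.
rewrite /zr3 flat3 allpairs_uniq ?uniq_zrange //.
  rewrite allpairs_uniq ?uniq_zrange //.
  by move=> [x1 y1] [x2 y2] _ _ /= [-> ->].
by move=> [x1 y1] [x2 y2] _ _ /= [-> ->].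
Qed.

Lemma sum_zr3 (R : nmodType) a b c (F : int * int * int -> R) :
  \sum_(x <- zr3 a b c) F x =
  \sum_(m <- zrange a) \sum_(n <- zrange b) \sum_(p <- zrange c) F (m, n, p).
Proof.
by rewrite /zr3 flat3 big_allpairs big_allpairs.
Qed.

Lemma sum_restr (T : eqType) (R : nmodType) (s1 s2 : seq T) (g : T -> R) :
  uniq s1 -> uniq s2 -> {subset s1 <= s2} ->
  \sum_(x <- s1) g x = \sum_(x <- s2) (if x \in s1 then g x else 0).
Proof.
move=> u1 u2 sub; rewrite -big_mkcond -big_filter; apply: perm_big.
apply: uniq_perm => //; first exact: filter_uniq.
by move=> x; rewrite mem_filter; case: (boolP (x \in s1)) => // /sub ->.
Qed.

Lemma zrangeS N : perm_eq (zrange N.+1) (N.+1%:Z :: - N.+1%:Z :: zrange N).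
Proof.
apply: uniq_perm; first exact: uniq_zrange.
  rewrite cons_uniq in_cons cons_uniq uniq_zrange !mem_zrange andbT.
  apply/andP; split; lia.
move=> x; rewrite mem_zrange in_cons in_cons mem_zrange; apply/idP/idP.
  move=> /andP[h1 h2].
  case: (boolP (x == N.+1%:Z)) => //= ne1.
  case: (boolP (x == - N.+1%:Z)) => //= ne2.
  apply/andP; split; lia.
case/orP; first by move/eqP => ->; apply/andP; split; lia.
case/orP; first by move/eqP => ->; apply/andP; split; lia.
move=> /andP[h1 h2]; apply/andP; split; lia.
Qed.

Lemma sum_zrangeS (R : nmodType) L (F : int -> R) :
  \sum_(k <- zrange L.+1) F k = F L.+1%:Z + F (- L.+1%:Z) + \sum_(k <- zrange L) F k.
Proof. by rewrite (perm_big _ (zrangeS L)) /= big_cons big_cons addrA. Qed.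

Section Ana.
Variables (R : realType) (beta : R).
Hypothesis hb : 0 < beta.

Definition a (k : int) : R := k%:~R * expR (- (beta / 2 * (k ^+ 2)%:~R)).
Arguments a : simpl never.
Definition tf (x : int * int * int) : R :=
  a x.1.1 * a x.1.2 * a (x.1.1 + x.2) * a (x.1.2 + x.2).

Lemma term_eq m n p :
  (Tq m n p)%:~R * expR (- (beta * (Rq m n p)%:~R)) = tf (m, n, p).
Proof.
rewrite /tf /a /= /Tq /Rq.
have -> : - (beta * (m ^+ 2 + n ^+ 2 + p ^+ 2 + m * p + n * p)%:~R) =
  - (beta / 2 * (m ^+ 2)%:~R) + - (beta / 2 * (n ^+ 2)%:~R)
  + - (beta / 2 * ((m + p) ^+ 2)%:~R) + - (beta / 2 * ((n + p) ^+ 2)%:~R).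
  by rewrite !(rmorphD, rmorphM) /=; field.
rewrite !expRD !rmorphM /=; ring.
Qed.

Lemma a0 : a 0 = 0.
Proof. by rewrite /a mul0r. Qed.

Lemma aN k : a (- k) = - a k.
Proof. by rewrite /a sqrrN rmorphN mulNr. Qed.

Lemma theta_eq N : theta_partial beta N = \sum_(x <- zbox N) tf x.
Proof.
rewrite /theta_partial big_mkcond; apply: eq_bigr => -[[m n] p] _ /=.
case: eqP => [[-> -> ->]|_]; last by rewrite term_eq.
by rewrite /tf /= a0 !mul0r.
Qed.

Definition D : R := 32 / beta ^+ 2.

Lemma a_bound (n : nat) : (0 < n)%N -> `|a n| * n%:R * (n%:R + 1) <= D.
Proof.
move=> n0.
have hn : 1 <= (n%:R : R) by rewrite ler1n.
set y := beta / 2 * ((n%:Z) ^+ 2)%:~R.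
have ey : y = beta / 2 * n%:R ^+ 2 by rewrite /y rmorphXn.
set X := expR y.
have X0 : 0 < X := expR_gt0 _.
have hX : (y / 2) ^+ 2 <= X.
  have -> : X = expR (y / 2) ^+ 2 by rewrite expr2 -expRD -splitr.
  have h1 := expR_ge1Dx (y / 2).
  have y0 : 0 <= y / 2.
    rewrite ey; apply: divr_ge0 => //; apply: mulr_ge0; last exact: sqr_ge0.
    by apply: divr_ge0 => //; apply: ltW.
  rewrite !expr2; nra.
have key : n%:R ^+ 2 * (n%:R + 1) * beta ^+ 2 <= 32 * X.
  rewrite ey in hX.
  have e : (beta / 2 * n%:R ^+ 2 / 2) ^+ 2 = beta ^+ 2 * n%:R ^+ 4 / 16 by field.
  rewrite e in hX.
  have h4 : n%:R ^+ 2 * (n%:R + 1) <= 2 * (n%:R : R) ^+ 4.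
    have h5 : 0 <= (n%:R : R) * n%:R * (2 * n%:R + 1) by apply: mulr_ge0; [apply: mulr_ge0|]; lra.
    rewrite -subr_ge0.
    have -> : 2 * (n%:R : R) ^+ 4 - n%:R ^+ 2 * (n%:R + 1) = n%:R * n%:R * (2 * n%:R + 1) * (n%:R - 1) by ring.
    apply: mulr_ge0 => //; lra.
  have hb2 : 0 < beta ^+ 2 by apply: exprn_gt0.
  have : n%:R ^+ 2 * (n%:R + 1) * beta ^+ 2 <= 2 * (n%:R : R) ^+ 4 * beta ^+ 2.
    by rewrite ler_pM2r.
  lra.
have ea : `|a n| = n%:R / X.
  rewrite /a expRN -/y -/X ger0_norm; first by [].
  by apply: mulr_ge0; [exact: ler0n | rewrite invr_ge0; lra].
rewrite ea /D.
have hb2 : 0 < beta ^+ 2 by apply: exprn_gt0.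
rewrite ler_pdivlMr //.
have -> : n%:R / X * n%:R * (n%:R + 1) * beta ^+ 2 =
   (n%:R ^+ 2 * (n%:R + 1) * beta ^+ 2) / X by field; lra.
by rewrite ler_pdivrMr.
Qed.


Lemma D_ge0 : 0 <= D.
Proof. by rewrite /D divr_ge0 // exprn_ge0 // ltW. Qed.

Lemma absa_le k : `|a k| <= D.
Proof.
have hn (n : nat) : `|a n| <= D.
  case: n => [|n]; first by rewrite a0 normr0 D_ge0.
  apply: le_trans; last exact: (a_bound n.+1 isT).
  rewrite -mulrA ler_peMr //.
  have : (1 : R) <= n.+1%:R by rewrite ler1n.
  nra.
case: k => n; first exact: hn.
by rewrite NegzE aN normrN.
Qed.

Lemma sum_a_bound L : \sum_(k <- zrange L) `|a k| <= 2 * D - 2 * D / (L.+1)%:R.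
Proof.
elim: L => [|L IH].
  have -> : zrange 0 = [:: 0] by [].
  by rewrite big_seq1 a0 normr0 divr1 subrr.
rewrite sum_zrangeS aN normrN.
have hab := a_bound L.+1 isT.
set y := `|a L.+1%:Z| in hab *.
set x := (L.+1%:R : R) in hab IH *.
have hx : 1 <= x by rewrite ler1n.
have -> : (L.+2%:R : R) = x + 1 by rewrite /x -natr1.
have e : 2 * D / x - 2 * D / (x + 1) - 2 * y = 2 * (D - y * x * (x + 1)) / (x * (x + 1)).
  by field; apply/andP; split; lra.
have : 0 <= 2 * (D - y * x * (x + 1)) / (x * (x + 1)).
  apply: divr_ge0; first lra.
  apply: mulr_ge0; lra.
rewrite -e; move: IH; set u := 2 * D / x; set v := 2 * D / (x + 1); lra.
Qed.

Lemma sum_a_le L : \sum_(k <- zrange L) `|a k| <= 2 * D.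
Proof.
apply: le_trans; first exact: (sum_a_bound L).
 rewrite gerBl divr_ge0 ?ler0n //.
by rewrite mulr_ge0 ?D_ge0.
Qed.

Lemma sum_a_shift L (m : int) : \sum_(p <- zrange L) `|a (m + p)| <= 2 * D.
Proof.
rewrite -(big_map (fun p => m + p) xpredT (fun k => `|a k|)).
rewrite (@sum_restr _ _ _ (zrange (L + `|m|)%N)).
- apply: le_trans; last exact: (sum_a_le (L + `|m|)%N).
  apply: ler_sum => k _.
  by case: ifP.
- by rewrite map_inj_uniq ?uniq_zrange // => x y /addrI.
- exact: uniq_zrange.
move=> k /mapP[p]; rewrite !mem_zrange => /andP[h1 h2] ->.
apply/andP; split; lia.
Qed.

Definition B : R := D * (2 * D) * (2 * D) * (2 * D).

Lemma sum_p_bound N m n :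
  \sum_(p <- zrange N) `|tf (m, n, p)| <= (`|a m| * (D * (2 * D))) * `|a n|.
Proof.
apply: (@le_trans _ _ (\sum_(p <- zrange N) (`|a m| * `|a n| * D) * `|a (m + p)|)).
  apply: ler_sum => p _; rewrite /tf /= normrM normrM normrM.
  rewrite [in X in _ <= X]mulrAC; apply: ler_wpM2l; last exact: absa_le.
  by repeat apply: mulr_ge0 => //.
rewrite -mulr_sumr.
have -> : `|a m| * (D * (2 * D)) * `|a n| = (`|a m| * `|a n| * D) * (2 * D) by ring.
apply: ler_wpM2l; last exact: sum_a_shift.
by apply: mulr_ge0; [apply: mulr_ge0|apply: D_ge0].
Qed.

Lemma sum_abs_bound N : \sum_(x <- zbox N) `|tf x| <= B.
Proof.
rewrite zboxE sum_zr3.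
have hD := D_ge0.
apply: (@le_trans _ _ (\sum_(m <- zrange N) (D * (2 * D) * (2 * D)) * `|a m|)).
  apply: ler_sum => m _.
  apply: (@le_trans _ _ (\sum_(n <- zrange N) (`|a m| * (D * (2 * D))) * `|a n|)).
    by apply: ler_sum => n _; apply: sum_p_bound.
  rewrite -mulr_sumr.
  have -> : D * (2 * D) * (2 * D) * `|a m| = (`|a m| * (D * (2 * D))) * (2 * D) by ring.
  apply: ler_wpM2l; last exact: sum_a_le.
  by repeat apply: mulr_ge0 => //.
rewrite -mulr_sumr /B; apply: ler_wpM2l; last exact: sum_a_le.
by repeat apply: mulr_ge0 => //.
Qed.

Lemma uniq_zbox N : uniq (zbox N). Proof. exact: uniq_zr3. Qed.

Lemma mem_zbox N x : (x \in zbox N) =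
  [&& (- (N%:Z) <= x.1.1 <= N%:Z), (- (N%:Z) <= x.1.2 <= N%:Z) & (- (N%:Z) <= x.2 <= N%:Z)].
Proof. by rewrite zboxE mem_zr3 !mem_zrange. Qed.

Lemma zbox_sub N M : (N <= M)%N -> {subset zbox N <= zbox M}.
Proof.
move=> h x; rewrite !mem_zbox => /and3P[/andP[h1 h2] /andP[h3 h4] /andP[h5 h6]].
apply/and3P; split; apply/andP; split; lia.
Qed.

Lemma box_mono (g : int * int * int -> R) N M : (forall x, 0 <= g x) -> (N <= M)%N ->
  \sum_(x <- zbox N) g x <= \sum_(x <- zbox M) g x.
Proof.
move=> g0 h; rewrite (@sum_restr _ _ _ (zbox M)) ?uniq_zbox //; last exact: zbox_sub.
by apply: ler_sum => x _; case: ifP.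
Qed.


Definition phi (y : int * int * int) : int * int * int :=
  (y.1.1, y.1.2, y.2 - y.1.1 - y.1.2).

Definition Dseq K := map phi (zr3 K K (3 * K)).

Lemma uniq_Dseq K : uniq (Dseq K).
Proof.
rewrite map_inj_uniq ?uniq_zr3 // => -[[m1 n1] s1] [[m2 n2] s2] [e1 e2 e3].
subst; congr (_, _, _); lia.
Qed.

Lemma mem_Dseq K x : (x \in Dseq K) =
  [&& (- (K%:Z) <= x.1.1 <= K%:Z), (- (K%:Z) <= x.1.2 <= K%:Z) &
      (- ((3 * K)%N%:Z) <= x.1.1 + x.1.2 + x.2 <= (3 * K)%N%:Z)].
Proof.
apply/mapP/idP.
  case=> -[[m n] s]; rewrite mem_zr3 !mem_zrange /= => /and3P[h1 h2 h3] ->.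
  rewrite /phi /=; apply/and3P; split => //; lia.
case: x => [[m n] p] /= /and3P[h1 h2 h3].
exists (m, n, m + n + p); last by rewrite /phi /=; congr (_, _, _); ring.
by rewrite mem_zr3 !mem_zrange /=; apply/and3P; split.
Qed.

Lemma zbox_Dseq K : {subset zbox K <= Dseq K}.
Proof.
move=> x; rewrite mem_zbox mem_Dseq => /and3P[/andP[h1 h2] /andP[h3 h4] /andP[h5 h6]].
apply/and3P; split; apply/andP; split; lia.
Qed.

Lemma Dseq_zbox K : {subset Dseq K <= zbox (5 * K)}.
Proof.
move=> x; rewrite mem_zbox mem_Dseq => /and3P[/andP[h1 h2] /andP[h3 h4] /andP[h5 h6]].
apply/and3P; split; apply/andP; split; lia.
Qed.

Definition c K (s : int) : R := \sum_(m <- zrange K) a m * a (s - m).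

Lemma sumD K : \sum_(x <- Dseq K) tf x = \sum_(s <- zrange (3 * K)) c K s ^+ 2.
Proof.
rewrite big_map sum_zr3.
transitivity (\sum_(m <- zrange K) \sum_(n <- zrange K) \sum_(s <- zrange (3 * K))
   (a m * a (s - m)) * (a n * a (s - n))).
  apply: eq_bigr => m _; apply: eq_bigr => n _; apply: eq_bigr => s _.
  rewrite /tf /phi /=.
  have -> : m + (s - m - n) = s - n by ring.
  have -> : n + (s - m - n) = s - m by ring.
  ring.
transitivity (\sum_(m <- zrange K) \sum_(s <- zrange (3 * K)) \sum_(n <- zrange K)
   (a m * a (s - m)) * (a n * a (s - n))).
  by apply: eq_bigr => m _; rewrite exchange_big.
rewrite exchange_big; apply: eq_bigr => s _.
rewrite expr2 /c mulr_suml; apply: eq_bigr => m _.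
by rewrite mulr_sumr.
Qed.

Lemma c0_le K : (1 <= K)%N -> c K 0 <= - (a 1 ^+ 2).
Proof.
move=> hK; rewrite /c (bigD1_seq 1) ?uniq_zrange //=; last first.
  by rewrite mem_zrange; apply/andP; split; lia.
rewrite [0 - 1]sub0r aN mulrN -expr2.
have : \sum_(i <- zrange K | i != 1) a i * a (0 - i) <= 0.
  apply: sumr_le0 => i _; rewrite sub0r aN mulrN oppr_le0 -expr2; exact: sqr_ge0.
have := sqr_ge0 (a 1); rewrite expr2; lra.
Qed.

Lemma sumD_ge K : (1 <= K)%N -> a 1 ^+ 4 <= \sum_(x <- Dseq K) tf x.
Proof.
move=> hK; rewrite sumD (bigD1_seq 0) ?uniq_zrange //=; last first.
  by rewrite mem_zrange; apply/andP; split; lia.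
have : 0 <= \sum_(i <- zrange (3 * K) | i != 0) c K i ^+ 2.
  by apply: sumr_ge0 => i _; exact: sqr_ge0.
have h := c0_le K hK.
have h2 : a 1 ^+ 4 <= c K 0 ^+ 2.
  have -> : a 1 ^+ 4 = (a 1 ^+ 2) ^+ 2 by rewrite -exprM.
  rewrite -[c K 0 ^+ 2]sqrrN.
  apply: lerXn2r; rewrite ?nnegrE ?sqr_ge0 //; first by apply: le_trans (sqr_ge0 (a 1)) _; lra.
  lra.
lra.
Qed.

End Ana.

Local Open Scope classical_set_scope.

Theorem lemma5p2 (R : realType) (beta : R) (hbeta : 0 < beta) :
  exists S : R, theta_partial beta N @[N --> \oo] --> S /\ 0 < S.
Proof.
pose t := @tf R beta.
pose P N : R := \sum_(x <- zbox N) ((`|t x| + t x) / 2).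
pose Q N : R := \sum_(x <- zbox N) ((`|t x| - t x) / 2).
pose V N : R := \sum_(x <- zbox N) `|t x|.
pose Fz N := \sum_(x <- zbox N) t x.
have tp0 x : 0 <= (`|t x| + t x) / 2.
  have := ler_norm (- t x); rewrite normrN; lra.
have tn0 x : 0 <= (`|t x| - t x) / 2.
  have := ler_norm (t x); lra.
have hB N : V N <= B R beta := @sum_abs_bound R beta hbeta N.
have Pmono : {homo P : n m / (n <= m)%N >-> n <= m}.
  by move=> n m h; apply: box_mono.
have Qmono : {homo Q : n m / (n <= m)%N >-> n <= m}.
  by move=> n m h; apply: box_mono.
have Pub : has_ubound (range P).
  exists (B R beta) => _ [N _ <-]; apply: le_trans (hB N); apply: ler_sum => x _.
  have := ler_norm (t x); lra.
have Qub : has_ubound (range Q).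
  exists (B R beta) => _ [N _ <-]; apply: le_trans (hB N); apply: ler_sum => x _.
  have := ler_norm (- t x); rewrite normrN; lra.
have Pc := nondecreasing_cvgn Pmono Pub.
have Qc := nondecreasing_cvgn Qmono Qub.
have FPQ : (fun N => theta_partial beta N) = (fun N => P N - Q N).
  apply: funext => M; rewrite theta_eq -sumrB; apply: eq_bigr => x _.
  by rewrite /t; field.
have VPQ : V = (fun N => P N + Q N).
  apply: funext => M; rewrite /V /P /Q -big_split /=; apply: eq_bigr => x _; lra.
have Fc : theta_partial beta N @[N --> \oo] --> sup (range P) - sup (range Q).
  by rewrite FPQ; apply: cvgB.
have Vc : V N @[N --> \oo] --> sup (range P) + sup (range Q).
  by rewrite VPQ; apply: cvgD.
exists (sup (range P) - sup (range Q)); split => //.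
set S := sup (range P) - sup (range Q).
set Vl := sup (range P) + sup (range Q).
pose d := a R beta 1 ^+ 4.
have d0 : 0 < d.
  rewrite /d exprn_gt0 // /a mulr_gt0 ?expR_gt0 //.
pose e := d / 4.
have e0 : 0 < e by rewrite /e divr_gt0.
move/cvgrPdist_lt/(_ e e0): Fc => hF.
move/cvgrPdist_lt/(_ e e0): Vc => hV.
case: hF => N1 _ HN1.
case: hV => N2 _ HN2.
pose K := (maxn N1 N2).+1.
have hK : (1 <= K)%N by [].
have f1 : `|S - theta_partial beta (5 * K)%N| < e by apply: HN1 => /=; lia.
have f2 : `|Vl - V (5 * K)%N| < e by apply: HN2 => /=; lia.
have f3 : `|Vl - V K| < e by apply: HN2 => /=; lia.
have f4 := @sumD_ge R beta hbeta K hK.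
have f5 : `|Fz (5 * K)%N - \sum_(x <- Dseq K) t x| <= V (5 * K)%N - V K.
  rewrite (@sum_restr _ _ _ (zbox (5 * K))) ?uniq_Dseq ?uniq_zbox //; last exact: Dseq_zbox.
  rewrite /V (@sum_restr _ _ (zbox K) (zbox (5 * K))) ?uniq_zbox //; last by apply: zbox_sub; lia.
  rewrite /Fz -!sumrB; apply: le_trans (ler_norm_sum _ _ _) _.
  apply: ler_sum => x _.
  case: (boolP (x \in Dseq K)) => hx.
    rewrite subrr normr0; case: ifP => _; rewrite ?subrr ?subr0 //.
  have hx' : x \notin zbox K by apply: contra hx; apply: zbox_Dseq.
  by rewrite (negbTE hx') !subr0.
  exact: uniq_Dseq.
have eF : theta_partial beta (5 * K)%N = Fz (5 * K)%N by rewrite theta_eq.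
rewrite eF in f1.
move: f1 f2 f3 f5; rewrite !ltr_norml ler_norml => /andP[f1 f1'] /andP[f2 f2'] /andP[f3 f3'] /andP[f5 f5'].
have : 0 < d - 3 * e by rewrite /e; lra.
move: f4; rewrite -/d -/t => f4.
lra.
Unshelve. all: exact: R.
Qed.
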